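(* Let $(M,\Sigma)$ be a measurable space, $r\ge1$, and $\mu_1,\dots,\mu_r$ non-atomic countably additive finite measures on $\Sigma$. Let $S\in\Sigma$ satisfy $\prod_{i=1}^r\mu_i(S)\neq0$. Then there exist pairwise disjoint measurable sets $R^1,\dots,R^r\subseteq S$ and a permutation $(l_1,\dots,l_r)$ of $\{1,\dots,r\}$ such that for each $k$ we have $\mu_{l_k}(R^k)=\frac1r\mu_{l_k}(S)$, and for all $j>k$ we have $\mu_{l_j}(R^k)\le\frac1r\mu_{l_j}(S)$. *)

(* Defs.v *)
From HB Require Import structures.
From mathcomp Require Import all_boot all_order all_algebra all_fingroup.
From mathcomp Require Import all_classical all_reals all_analysis.
Set Implicit Arguments. Unset Strict Implicit. Unset Printing Implicit Defensive.
Import Order.TTheory GRing.Theory Num.Theory.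
Local Open Scope classical_set_scope.
Local Open Scope ring_scope.

Definition non_atomic d (T : measurableType d) (R : realType)
  (mu : set T -> \bar R) : Prop :=
  forall A, measurable A -> (0 < mu A)%E ->
    exists B, [/\ measurable B, B `<=` A & (0 < mu B < mu A)%E].

(* Main.v *)
Require Import Defs.
From HB Require Import structures.
From mathcomp Require Import all_boot all_order all_algebra all_fingroup.
From mathcomp Require Import all_classical all_reals all_analysis.
Import Order.TTheory GRing.Theory Num.Theory.
Local Open Scope classical_set_scope.
Local Open Scope ring_scope.


Section L9.
Context (d : measure_display) (M : measurableType d) (R : realType)
  (r : nat) (mu : 'I_r -> {finite_measure set M -> \bar R})
  (hna : forall i, non_atomic (mu i)).

Definition m i (A : set M) : R := fine (mu i A).
Definition nu (A : set M) : R := \sum_(i < r) m i A.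

Lemma mE i A : measurable A -> mu i A = (m i A)%:E.
Proof. by move=> mA; rewrite /m fineK // fin_num_measure. Qed.

Lemma m_ge0 i A : 0 <= m i A.
Proof. exact/fine_ge0/measure_ge0. Qed.

Lemma m0 i : m i set0 = 0.
Proof. by rewrite /m measure0. Qed.

Lemma mU i A B : measurable A -> measurable B -> A `&` B = set0 ->
  m i (A `|` B) = m i A + m i B.
Proof.
move=> mA mB AB; rewrite /m measureU // fineD //; exact: fin_num_measure.
Qed.

Lemma m_le i A B : measurable A -> measurable B -> A `<=` B -> m i A <= m i B.
Proof.
move=> mA mB AB; rewrite /m fine_le ?fin_num_measure //.
by apply: le_measure => //; rewrite inE.
Qed.

Lemma m_diff i A B : measurable A -> measurable B -> A `<=` B ->
  m i (B `\` A) = m i B - m i A.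
Proof.
move=> mA mB AB; rewrite -[in RHS](setDUK AB) mU ?setDIK //; last exact: measurableD.
by rewrite addrAC subrr add0r.
Qed.

Lemma nu_ge0 A : 0 <= nu A.
Proof. by apply: sumr_ge0 => i _; exact: m_ge0. Qed.

Lemma nu0 : nu set0 = 0.
Proof. by rewrite /nu big1 // => i _; rewrite m0. Qed.

Lemma nuU A B : measurable A -> measurable B -> A `&` B = set0 ->
  nu (A `|` B) = nu A + nu B.
Proof. by move=> mA mB AB; rewrite /nu -big_split; apply: eq_bigr => i _; rewrite mU. Qed.

Lemma nu_le A B : measurable A -> measurable B -> A `<=` B -> nu A <= nu B.
Proof. by move=> mA mB AB; apply: ler_sum => i _; exact: m_le. Qed.

Lemma nu_diff A B : measurable A -> measurable B -> A `<=` B ->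
  nu (B `\` A) = nu B - nu A.
Proof.
by move=> mA mB AB; rewrite /nu -sumrB; apply: eq_bigr => i _; rewrite m_diff.
Qed.

Lemma m_le_nu i A : m i A <= nu A.
Proof.
rewrite /nu (bigD1 i) //= lerDl; apply: sumr_ge0 => j _; exact: m_ge0.
Qed.


Lemma nu_split D : measurable D -> 0 < nu D ->
  exists C, [/\ measurable C, C `<=` D & 0 < nu C < nu D].
Proof.
move=> mD nuD.
have [i Hi] : exists i, 0 < m i D.
  case: (pselect (exists i, 0 < m i D)) => // H; exfalso.
  suff : nu D <= 0 by rewrite leNgt nuD.
  rewrite /nu; apply: sumr_le0 => i _; rewrite leNgt; apply/negP => h.
  by apply: H; exists i.
have := @hna i D mD; rewrite mE // lte_fin => /(_ Hi) [C [mC CD]].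
rewrite !mE // !lte_fin => /andP[C0 CD'].
exists C; split => //; apply/andP; split.
  exact: lt_le_trans C0 (m_le_nu _ _).
have : 0 < nu (D `\` C).
  apply: lt_le_trans (m_le_nu i _).
  by rewrite m_diff // subr_gt0.
by rewrite nu_diff // subr_gt0.
Qed.

Lemma nu_half D : measurable D -> 0 < nu D ->
  exists C, [/\ measurable C, C `<=` D, 0 < nu C & nu C <= nu D / 2].
Proof.
move=> mD nuD; have [C [mC CD /andP[C0 CD']]] := nu_split D mD nuD.
case: (leP (nu C) (nu D / 2)) => h.
  by exists C.
exists (D `\` C); split.
- exact: measurableD.
- by move=> x [].
- by rewrite nu_diff // subr_gt0.
- rewrite nu_diff //; move: h; set a := nu C; set b := nu D => h.
  rewrite lerBlDl -lerBlDr; apply: ltW; apply: le_lt_trans h.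
  by rewrite {1}(splitr b) addrK.
Qed.

Lemma nu_pow D n : measurable D -> 0 < nu D ->
  exists C, [/\ measurable C, C `<=` D, 0 < nu C & nu C <= nu D / 2 ^+ n].
Proof.
move=> mD nuD; elim: n => [|n [C [mC CD C0 Cle]]].
  by exists D; rewrite expr0 divr1; split.
have [C' [mC' C'C C'0 C'le]] := nu_half C mC C0.
exists C'; split => //; first exact: subset_trans C'C CD.
apply: le_trans C'le _; rewrite exprSr invfM mulrA.
by rewrite ler_pM2r // invr_gt0.
Qed.

Lemma nu_eps D eps : measurable D -> 0 < nu D -> 0 < eps ->
  exists C, [/\ measurable C, C `<=` D, 0 < nu C & nu C <= eps].
Proof.
move=> mD nuD e0.
set n := Num.Def.archi_bound (nu D / eps).
have hn : nu D / eps < 2 ^+ n.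
  apply: lt_le_trans (archi_boundP _) _; first by rewrite divr_ge0 // ?ltW.
  rewrite -natrX ler_nat; apply: ltnW; exact: ltn_expl.
have [C [mC CD C0 Cle]] := nu_pow D n mD nuD.
exists C; split => //; apply: le_trans Cle _.
rewrite ler_pdivrMr ?exprn_gt0 //.
by rewrite ltr_pdivrMr // in hn; rewrite mulrC ltW.
Qed.


Section Core.
Variables (A : set M) (J : pred 'I_r) (c : 'I_r -> R).
Hypothesis mA : measurable A.
Hypothesis c0 : forall j, J j -> 0 <= c j.

Definition okC (B C : set M) :=
  [/\ measurable C, C `<=` A `\` B & forall j, J j -> m j B + nu C <= c j].
Definition feas (B : set M) := forall j, J j -> m j B <= c j.
Definition EE B : set R := fun x => exists2 C, okC B C & nu C = x.

Lemma hasE B : feas B -> has_sup (EE B).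
Proof.
move=> fB; split.
  exists 0, set0; last exact: nu0.
  split => //; try by move=> x [].
  by move=> j Jj; rewrite nu0 addr0; exact: fB.
exists (nu A) => x [C [mC CA _] <-].
apply: nu_le => //; exact: subset_trans CA (@subDsetl _ _ _).
Qed.

Lemma step_ex B : exists C, feas B -> okC B C /\ sup (EE B) / 2 <= nu C.
Proof.
case: (pselect (feas B)) => fB; last by exists set0.
have hs := hasE B fB.
case: (ltP 0 (sup (EE B))) => sp.
  have [x [C oC <-] hx] := sup_adherent (divr_gt0 sp (ltr0Sn _ 1)) hs.
  exists C => _; split => //; apply: ltW; move: hx.
  by rewrite {1}(splitr (sup (EE B))) addrK.
exists set0 => _; split.
  split => //; try by move=> x [].
  by move=> j Jj; rewrite nu0 addr0; exact: fB.
by rewrite nu0 pmulr_lle0 // invr_gt0 ltr0Sn.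
Qed.


Lemma core j0 : J j0 -> c j0 <= m j0 A ->
  exists B l, [/\ measurable B, B `<=` A, J l, m l B = c l
                & forall j, J j -> m j B <= c j].
Proof.
move=> Jj0 cj0.
case: (choice step_ex) => f hf.
pose F := fun B => B `|` f B.
pose Bn := fun n => iter n F set0.
have BnS n : Bn n.+1 = Bn n `|` f (Bn n) by [].
have inv n : [/\ measurable (Bn n), Bn n `<=` A & feas (Bn n)].
  elim: n => [|n [mB BA fB]].
    split; [exact: measurable0 | by move=> x [] | move=> j Jj; rewrite /= m0; exact: c0].
  have [[mC CA hC] _] := hf _ fB.
  have dj : Bn n `&` f (Bn n) = set0.
    by apply/seteqP; split => x // [Bx /CA [_ /(_ Bx) []]].
  rewrite BnS; split.
  - exact: measurableU.
  - by move=> x [/BA|/CA []].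
  - move=> j Jj; rewrite mU //; apply: le_trans (hC j Jj).
    by rewrite lerD2l; exact: m_le_nu.
have nuS n : nu (Bn n.+1) = nu (Bn n) + nu (f (Bn n)).
  have [mB _ fB] := inv n; have [[mC CA _] _] := hf _ fB.
  rewrite BnS nuU //; apply/seteqP; split => x // [Bx /CA [_ /(_ Bx) []]].
have mono : {homo Bn : p k / (p <= k)%N >-> (p <= k)%O}.
  move=> p k; rewrite subsetEset; elim: k => [|k IH].
    by rewrite leqn0 => /eqP ->.
  rewrite leq_eqVlt => /orP[/eqP -> //| /IH]; rewrite BnS => h.
  exact: subset_trans h (@subsetUl _ _ _).
pose B := \bigcup_n Bn n.
have mB : measurable B by apply: bigcupT_measurable => k; case: (inv k).
have BA : B `<=` A by move=> x [k _]; case: (inv k) => _ + _; apply.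
have BnB n : Bn n `<=` B by move=> x Bx; exists n.
have fBfin : feas B.
  move=> j Jj.
  have cv := @nondecreasing_cvg_mu _ _ _ (mu j) _ (fun n => let: And3 h _ _ := inv n in h) mB mono.
  have : (mu j B <= (c j)%:E)%E.
    rewrite -(cvg_lim _ cv) //; apply: lime_le.
      by apply/cvg_ex; eexists; exact: cv.
    apply: nearW => n /=; have [mBn _ fBn] := inv n.
    by rewrite mE // lee_fin; exact: fBn.
  by rewrite mE // lee_fin.
case: (pselect (exists l, J l /\ c l <= m l B)) => [[l [Jl cl]]|H].
  exists B, l; split => //; apply/le_anti; rewrite cl fBfin //.
have lt j : J j -> m j B < c j.
  by move=> Jj; rewrite ltNge; apply/negP => h; apply: H; exists j.
pose eps := \big[Num.min/1]_(j | J j) (c j - m j B).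
have eps0 : 0 < eps by apply: lt_bigmin => // j Jj; rewrite subr_gt0 lt.
have epsle j : J j -> eps <= c j - m j B by move=> Jj; apply: bigmin_le_cond.
pose D := A `\` B.
have mD : measurable D by apply: measurableD.
have nuD : 0 < nu D.
  apply: lt_le_trans (m_le_nu j0 _); rewrite m_diff // subr_gt0.
  exact: lt_le_trans (lt _ Jj0) cj0.
have [C [mC CD C0 Ceps]] := nu_eps D eps mD nuD eps0.
have key n : nu C / 2 <= nu (f (Bn n)).
  have [mBn BnA fBn] := inv n.
  have okn : okC (Bn n) C.
    split => //; first by move=> x /CD [Ax nBx]; split => // Bnx; apply: nBx; exists n.
    move=> j Jj; apply: (@le_trans _ _ (m j B + eps)).
      by apply: lerD => //; apply: m_le => //; exact: BnB.
    by rewrite -lerBrDl epsle.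
  have [_ h] := hf _ fBn.
  apply: le_trans h; rewrite ler_pM2r ?invr_gt0 //.
  exact: (sup_upper_bound (hasE _ fBn)) (ex_intro2 _ _ C okn erefl).
have grow n : n%:R * (nu C / 2) <= nu (Bn n).
  elim: n => [|n IH]; first by rewrite mul0r nu0.
  by rewrite nuS -natr1 mulrDl mul1r; exact: lerD IH (key n).
have bound n : nu (Bn n) <= nu A by have [? ? _] := inv n; apply: nu_le.
exfalso.
have a0 : 0 < nu C / 2 by rewrite divr_gt0.
have := archi_boundP (divr_ge0 (nu_ge0 A) (ltW a0)).
set N := Num.Def.archi_bound _; rewrite ltr_pdivrMr // => h.
have := le_trans (grow N) (bound N); rewrite leNgt h //.
Qed.

End Core.


Section Main.
Variables (S : set M) (mS : measurable S) (hr : (0 < r)%N).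

Definition cc j := (r%:R)^-1 * m j S.

Lemma cc_ge0 j : 0 <= cc j.
Proof. by rewrite /cc mulr_ge0 // ?invr_ge0 // m_ge0. Qed.

Definition Inv n (L : nat -> 'I_r) (Rs : nat -> set M) (A : set M) :=
  [/\ measurable A /\ A `<=` S,
   (forall k, (k < n)%N -> [/\ measurable (Rs k), Rs k `<=` S & Rs k `&` A = set0]),
   (forall k k', (k < n)%N -> (k' < n)%N -> k != k' ->
        Rs k `&` Rs k' = set0 /\ L k != L k'),
   (forall k, (k < n)%N -> m (L k) (Rs k) = cc (L k)) /\
   (forall k j, (k < n)%N -> (forall k', (k' <= k)%N -> L k' != j) -> m j (Rs k) <= cc j)
  & (forall j, (forall k, (k < n)%N -> L k != j) -> (r - n)%:R * cc j <= m j A)].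

Lemma pigeon n (L : nat -> 'I_r) : (n < r)%N ->
  exists j0, forall k, (k < n)%N -> L k != j0.
Proof.
move=> nr; case: (pselect (exists j0, forall k, (k < n)%N -> L k != j0)) => // H.
exfalso.
have : (#|'I_r| <= #|'I_n|)%N.
  apply: leq_trans (leq_image_card (fun k : 'I_n => L k) 'I_n).
  apply: subset_leq_card; apply/fintype.subsetP => j _.
  have [k [kn /negPn /eqP <-]] : exists k, (k < n)%N /\ ~~ (L k != j).
    case: (pselect (exists k, (k < n)%N /\ ~~ (L k != j))) => // H'.
    exfalso; apply: H; exists j => k kn; apply/negP => h; apply: H'; exists k.
    by split => //; apply/negP => /negP.
  by apply/fintype.imageP; exists (Ordinal kn).
by rewrite !card_ord leqNgt nr.
Qed.

Lemma main_ind n : (n <= r)%N -> exists L Rs A, Inv n L Rs A.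
Proof.
elim: n => [_|n IH nr].
  exists (fun _ => Ordinal hr), (fun _ => set0), S; split => //.
  - by split.
  move=> j _; rewrite subn0 /cc mulrA mulfV ?mul1r //.
  by rewrite pnatr_eq0 -lt0n.
have [L [Rs [A [[mA AS] hR hD [hE hL] hA]]]] := IH (ltnW nr).
have [j0 hj0] := pigeon n L nr.
pose J := fun j => [forall k : 'I_n, L k != j].
have JP j : J j <-> forall k, (k < n)%N -> L k != j.
  split; first by move=> /forallP h k kn; exact: (h (Ordinal kn)).
  by move=> h; apply/forallP => k; apply: h.
have rn1 : 1 <= (r - n)%:R :> R by rewrite ler1n subn_gt0.
have cJ j : J j -> cc j <= m j A.
  move=> /JP Jj; apply: le_trans (hA j Jj).
  by rewrite ler_peMl ?cc_ge0.
have [B [l [mB BA Jl Bl BJ]]] :=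
  core A J cc mA (fun j _ => cc_ge0 j) j0 ((JP j0).2 hj0) (cJ j0 ((JP j0).2 hj0)).
exists (fun k => if k == n then l else L k), (fun k => if k == n then B else Rs k),
  (A `\` B).
split.
- split; first exact: measurableD.
  by move=> x [/AS].
- move=> k; rewrite ltnS leq_eqVlt => /orP[/eqP ->|kn]; rewrite ?eqxx.
    split => //; first by move=> x /BA /AS.
    by apply/seteqP; split => x // [Bx []].
  rewrite (ltn_eqF kn); have [mR RS RA] := hR k kn; split => //.
  by apply/seteqP; split => x // [Rx [Ax _]]; rewrite -RA.
- move=> k k'; rewrite !ltnS => hk hk'.
  have disjB k1 : (k1 < n)%N -> Rs k1 `&` B = set0.
    move=> k1n; have [_ _ RA] := hR k1 k1n.
    by apply/seteqP; split => x // [Rx /BA Ax]; rewrite -RA.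
  case: (eqVneq k n) => [kE|kn']; case: (eqVneq k' n) => [k'E|k'n'].
  + by rewrite kE k'E eqxx.
  + have k'n : (k' < n)%N by rewrite ltn_neqAle k'n' hk'.
    move=> _; split; first by rewrite setIC disjB.
    by move: ((JP l).1 Jl k' k'n); rewrite eq_sym.
  + have kn : (k < n)%N by rewrite ltn_neqAle kn' hk.
    move=> _; split; first by rewrite disjB.
    exact: ((JP l).1 Jl k kn).
  + have k'n : (k' < n)%N by rewrite ltn_neqAle k'n' hk'.
    have kn : (k < n)%N by rewrite ltn_neqAle kn' hk.
    by move=> kk; exact: hD.
- split.
    move=> k; rewrite ltnS leq_eqVlt => /orP[/eqP ->|kn]; rewrite ?eqxx //.
    by rewrite (ltn_eqF kn); exact: hE.
  move=> k j; rewrite ltnS leq_eqVlt => /orP[/eqP ->|kn] hk; rewrite ?eqxx.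
    apply: BJ; apply/JP => k' k'n.
    by have := hk k' (ltnW k'n); rewrite (ltn_eqF k'n).
  rewrite (ltn_eqF kn); apply: hL => // k' k'k.
  by have := hk k' k'k; rewrite (ltn_eqF (leq_ltn_trans k'k kn)).
- move=> j hj.
  have Jj : J j.
    by apply/JP => k kn; have := hj k (ltnW kn); rewrite (ltn_eqF kn).
  have lj : l != j by have := hj n (ltnSn n); rewrite eqxx.
  rewrite m_diff //; have := hA j ((JP j).1 Jj).
  have := BJ j Jj.
  rewrite subnS -[(r - n)%N]prednK ?subn_gt0 ?(leq_trans _ nr) //= -natr1 mulrDl mul1r.
  move=> h1 h2; rewrite lerBrDr; apply: le_trans h2; exact: lerD.
Qed.

End Main.

End L9.

Theorem lemma9 (d : measure_display) (M : measurableType d) (R : realType)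
  (r : nat) (hr : (0 < r)%N)
  (mu : 'I_r -> {finite_measure set M -> \bar R})
  (hna : forall i, non_atomic (mu i))
  (S : set M) (mS : measurable S)
  (hS : (\prod_(i < r) mu i S)%E != 0%E) :
  exists (Rs : 'I_r -> set M) (l : {perm 'I_r}),
    [/\ forall k, measurable (Rs k) /\ Rs k `<=` S,
        forall k k', k != k' -> Rs k `&` Rs k' = set0,
        forall k, mu (l k) (Rs k) = (((r%:R)^-1)%:E * mu (l k) S)%E
      & forall k j : 'I_r, (k < j)%N -> (mu (l j) (Rs k) <= ((r%:R)^-1)%:E * mu (l j) S)%E].

Proof.
have [L [Rs [A [_ hR hD [hE hL] _]]]] := @main_ind d M R r mu hna S mS hr r (leqnn r).
pose f := fun k : 'I_r => L k.
have finj : injective f.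
  move=> k k' /eqP; apply: contraTeq => kk.
  exact: (hD _ _ (ltn_ord k) (ltn_ord k') kk).2.
exists (fun k : 'I_r => Rs k), (perm finj); split.
- by move=> k; have [? ? _] := hR k (ltn_ord k).
- by move=> k k' kk; exact: (hD _ _ (ltn_ord k) (ltn_ord k') kk).1.
- move=> k; have [mR _ _] := hR k (ltn_ord k).
  by rewrite permE /f !mE // hE // /cc EFinM.
- move=> k j kj; have [mR _ _] := hR k (ltn_ord k).
  rewrite permE /f !mE // -EFinM lee_fin; apply: hL => // k' k'k.
  have ne : k' != j by rewrite neq_ltn (leq_ltn_trans k'k kj).
  exact: (hD _ _ (leq_ltn_trans k'k (ltn_ord k)) (ltn_ord j) ne).2.
Qed.
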